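(* There exists $N$ such that for all $n\ge N$ and all integers $k$ with $0\le k\le\frac{1}{20}\sqrt{n}$ the following holds. Let $G$ and $H$ be graphs on $n$ vertices, and let $\mathcal{C}$ be a multiset of $n-k$ unlabelled graphs on $n-1$ vertices such that $\mathcal{C}$ is a sub-multiset of both $\mathcal{D}(G)$ and $\mathcal{D}(H)$. Then $e(G)=e(H)$. (That is, the number of edges of a graph on $n$ vertices is reconstructible from any $n-k$ of its cards.)
   Context: All graphs are finite, simple and undirected. For a graph $G$ and $v\in V(G)$, the card $G-v$ is the graph obtained by deleting $v$ and all edges incident to it. The deck $\mathcal{D}(G)$ is the multiset of the $n=|V(G)|$ cards $G-v$, $v\in V(G)$, each considered up to isomorphism. $e(G)$ denotes the number of edges of $G$. *)

(* Defs.v *)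
From mathcomp Require Import all_boot all_fingroup.
Set Implicit Arguments. Unset Strict Implicit. Unset Printing Implicit Defensive.

Definition simple_graph (n : nat) (G : rel 'I_n) : Prop :=
  symmetric G /\ irreflexive G.

Definition nedges (n : nat) (G : rel 'I_n) : nat :=
  #|[set p : 'I_n * 'I_n | (p.1 < p.2) && G p.1 p.2]|.

(* The card G - v, with the remaining vertices relabelled by 'I_m via lift v. *)
Definition card_del (m : nat) (G : rel 'I_m.+1) (v : 'I_m.+1) : rel 'I_m :=
  fun i j => G (lift v i) (lift v j).

(* Graph isomorphism (equality of unlabelled graphs). *)
Definition graph_iso (m : nat) (G1 G2 : rel 'I_m) : Prop :=
  exists p : {perm 'I_m}, forall i j, G1 i j = G2 (p i) (p j).

(* Main.v *)
From Stdlib Require Import ZArith Lia.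
Require Import Defs.
From mathcomp Require Import all_boot all_fingroup zify.
Set Implicit Arguments. Unset Strict Implicit. Unset Printing Implicit Defensive.

Section Gen.
Variable T : finType.
Definition deg (G : rel T) u := #|[set w | G u w]|.
Definition Nge (G : rel T) y := #|[set u | y <= deg G u]|.
Definition Pc (G : rel T) v y := #|[set u | G v u && (deg G u == y)]|.
Definition cnt (G : rel T) y := #|[set u | deg G u == y]|.

Lemma sumb_card (I : finType) (B : pred I) : \sum_i (B i : nat) = #|B|.
Proof.
rewrite -sum1_card [RHS]big_mkcond /=; apply: eq_bigr => i _; rewrite unfold_in; by case: (B i).
Qed.

Lemma inj_count (I : finType) (f : I -> T) (P : pred T) :
  injective f -> \sum_i (P (f i) : nat) <= #|[set u | P u]|.
Proof.
move=> inj; rewrite (sumb_card (fun i => P (f i))).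
rewrite -(card_imset [pred i | P (f i)] inj).
apply: subset_leq_card; apply/subsetP => u /imsetP [i]; rewrite !inE => Pi ->; by [].
Qed.

Lemma inj_count2 (I : finType) (f : I -> T) (P : pred T) :
  injective f -> #|[set u | P u]| <= \sum_i (P (f i) : nat) + (#|T| - #|I|).
Proof.
move=> inj; rewrite (sumb_card (fun i => P (f i))).
have hc : #|~: (f @: [set: I])| = #|T| - #|I|.
  by rewrite cardsCs setCK card_imset // cardsT.
have hA : #|f @: [set i | P (f i)]| = #|[pred i | P (f i)]|.
  rewrite card_imset //; apply: eq_card => i; by rewrite !inE.
rewrite -hc -hA.
apply: (leq_trans _ (leq_card_setU (f @: [set i | P (f i)]) (~: (f @: [set: I]))).1).
apply: subset_leq_card; apply/subsetP => u; rewrite !inE => Pu.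
case: (boolP (u \in f @: [set: I])) => [/imsetP [i _ hu]|]; last by rewrite orbT.
rewrite hu in Pu *; apply/orP; left; apply: imset_f; by rewrite inE.
Qed.

Lemma sum_leq_x n (x : nat) : \sum_(y < n) (y <= x : nat) = minn n x.+1.
Proof.
elim: n => [|n IH]; first by rewrite big_ord0 min0n.
rewrite big_ord_recr /= IH. case: (leqP n x) => h.
- have -> : minn n x.+1 = n by apply/minn_idPl; lia.
  have -> : minn n.+1 x.+1 = n.+1 by apply/minn_idPl; lia.
  by rewrite addn1.
- have -> : minn n x.+1 = x.+1 by apply/minn_idPr; lia.
  have -> : minn n.+1 x.+1 = x.+1 by apply/minn_idPr; lia.
  by rewrite addn0.
Qed.

Lemma sum_eq_x n (x : nat) : \sum_(y < n) ((x == y :> nat) : nat) = (x < n).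
Proof.
elim: n => [|n IH]; first by rewrite big_ord0.
rewrite big_ord_recr /= IH ltnS. case: (ltngtP x n) => h.
- by [].
- by [].
- by [].
Qed.

Lemma card_set_sum (P : pred T) : #|[set u | P u]| = \sum_u (P u : nat).
Proof. rewrite (sumb_card P); apply: eq_card => u; by rewrite inE. Qed.

End Gen.

Section Graph.
Variable m : nat.
Implicit Types G H : rel 'I_m.+1.

Lemma card_lift (v : 'I_m.+1) (P : pred 'I_m.+1) :
  #|[set j : 'I_m | P (lift v j)]| = #|[set w | (w != v) && P w]|.
Proof.
rewrite -(card_imset _ (@lift_inj _ v)); apply: eq_card => w.
rewrite !inE; case: (eqVneq w v) => [->|wv] /=.
- apply/negbTE; apply/imsetP => [[j _ hj]]; move: (neq_lift v j); by rewrite -hj eqxx.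
- rewrite eq_sym in wv; have [j -> _] := unlift_some wv; rewrite mem_imset ?inE //; exact: lift_inj.
Qed.

Lemma deg_le G u : simple_graph G -> deg G u <= m.
Proof.
case=> _ irr. have : #|[set w | G u w]| <= #|[set~ u]|.
  apply: subset_leq_card; apply/subsetP => w; rewrite !inE; apply: contraTneq => ->; by rewrite irr.
by rewrite cardsC1 card_ord.
Qed.

Lemma deg_card G v j : simple_graph G ->
  deg (card_del G v) j + G (lift v j) v = deg G (lift v j).
Proof.
case=> sym irr. rewrite /deg (cardsD1 v [set w | G (lift v j) w]) inE addnC; congr (_ + _).
rewrite /card_del (card_lift v (fun w => G (lift v j) w)); apply: eq_card => w; by rewrite !inE.
Qed.

Lemma Nge_card G v y : simple_graph G ->
  Nge (card_del G v) y + (y <= deg G v) + Pc G v y = Nge G y.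
Proof.
move=> sG; have [sym irr] := sG.
have e1 : Nge (card_del G v) y = #|[set w | (w != v) && (y + G w v <= deg G w)]|.
  rewrite /Nge -(card_lift v (fun w => y + G w v <= deg G w)); apply: eq_card => j.
  by rewrite !inE -(deg_card v j sG) leq_add2r.
have c1 := cardsID [set u | G v u && (deg G u == y)] ([set u | y <= deg G u] :\ v).
have c2 : #|([set u | y <= deg G u] :\ v) :\: [set u | G v u && (deg G u == y)]|
   = #|[set w | (w != v) && (y + G w v <= deg G w)]|.
  apply: eq_card => u; rewrite !inE; case: (eqVneq u v) => [->|uv] /=; first by rewrite irr.
  rewrite (sym u v); case: (G v u) => /=; lia.
have c3 : #|([set u | y <= deg G u] :\ v) :&: [set u | G v u && (deg G u == y)]| = Pc G v y.
  rewrite /Pc; apply: eq_card => u; rewrite !inE; case: (eqVneq u v) => [->|uv] /=; first by rewrite irr.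
  case: (G v u) => /=; lia.
rewrite e1 /Nge (cardsD1 v [set u | y <= deg G u]) inE. lia.
Qed.

Lemma sum_Pc G v : simple_graph G -> \sum_(y < m.+1) Pc G v y = deg G v.
Proof.
move=> sG.
rewrite /Pc (eq_bigr (fun y : 'I_m.+1 => \sum_u ((G v u && (deg G u == y)) : nat))); last first.
  by move=> y _; rewrite card_set_sum.
rewrite exchange_big /deg card_set_sum /=; apply: eq_bigr => u _.
case: (G v u) => /=; last by rewrite big1.
have := sum_eq_x m.+1 (deg G u); rewrite ltnS deg_le // => <-.
Qed.

Lemma sum_Nge G : simple_graph G -> \sum_(y < m.+1) Nge G y = \sum_u deg G u + m.+1.
Proof.
move=> sG.
rewrite /Nge (eq_bigr (fun y : 'I_m.+1 => \sum_u ((y <= deg G u) : nat))); last first.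
  by move=> y _; rewrite card_set_sum.
rewrite exchange_big /=.
have e : \sum_u (deg G u).+1 = \sum_u deg G u + \sum_(u : 'I_m.+1) 1.
  rewrite -big_split; apply: eq_bigr => u _ /=; lia.
rewrite sum1_card card_ord in e; rewrite -e; apply: eq_bigr => u _.
rewrite sum_leq_x; have := deg_le u sG => h.
by apply/minn_idPr.
Qed.

Lemma handshake G : simple_graph G -> \sum_u deg G u = 2 * nedges G.
Proof.
case=> sym irr.
have e1 : nedges G = \sum_(u : 'I_m.+1) \sum_(w : 'I_m.+1) (((u < w) && G u w) : nat).
  rewrite /nedges card_set_sum pair_big /=; by apply: eq_bigr => [[u w]] _.
have e2 : \sum_u deg G u = \sum_(u : 'I_m.+1) \sum_(w : 'I_m.+1) (((u < w) && G u w) : nat)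
                           + \sum_(u : 'I_m.+1) \sum_(w : 'I_m.+1) (((w < u) && G w u) : nat).
  rewrite -big_split /=; apply: eq_bigr => u _; rewrite /deg card_set_sum -big_split /=.
  apply: eq_bigr => w _; rewrite (sym w u).
  case: (ltngtP u w) => h /=; try by rewrite ?addn0.
  by rewrite (val_inj h) irr.
have e3 : \sum_(u : 'I_m.+1) \sum_(w : 'I_m.+1) (((w < u) && G w u) : nat)
  = \sum_(u : 'I_m.+1) \sum_(w : 'I_m.+1) (((u < w) && G u w) : nat) by rewrite exchange_big.
rewrite e2 e3 -e1; lia.
Qed.

Lemma iso_Nge (m' : nat) (G1 G2 : rel 'I_m') y : graph_iso G1 G2 -> Nge G1 y = Nge G2 y.
Proof.
case=> p hp.
have hd : forall i, deg G1 i = deg G2 (p i).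
  move=> i; rewrite /deg -(@card_preimset _ p [set w | G2 (p i) w] (@perm_inj _ p)); apply: eq_card => j; by rewrite !inE hp.
rewrite /Nge -(@card_preimset _ p [set u | y <= deg G2 u] (@perm_inj _ p)); apply: eq_card => u; by rewrite !inE hd.
Qed.

End Graph.

Section Count.
Variables (T I : finType) (f : I -> T) (finj : injective f).
Local Notation K := (#|T| - #|I|).

Lemma Nge_split (G : rel T) y : Nge G y = cnt G y + Nge G y.+1.
Proof.
rewrite /Nge /cnt !card_set_sum -big_split /=; apply: eq_bigr => u _.
case: (ltngtP y (deg G u)) => h /=; lia.
Qed.

Lemma Nge_bound (G : rel T) y : Nge G y <= #|T|.
Proof. by rewrite /Nge max_card. Qed.

Lemma Nge0 (G : rel T) : Nge G 0 = #|T|.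
Proof. by rewrite /Nge; apply: eq_card => u; rewrite inE. Qed.

Lemma sumP_eq (G : rel T) y : symmetric G ->
  \sum_i Pc G (f i) y = \sum_u ((deg G u == y) * \sum_i (G u (f i) : nat)).
Proof.
move=> sym.
rewrite /Pc (eq_bigr (fun i => \sum_u ((G (f i) u && (deg G u == y)) : nat))); last first.
  by move=> i _; rewrite card_set_sum.
rewrite exchange_big /=; apply: eq_bigr => u _.
rewrite big_distrr /=; apply: eq_bigr => i _; rewrite (sym u (f i)).
by case: (G (f i) u); case: (deg G u == y).
Qed.

Lemma sumP_le (G : rel T) y : symmetric G -> \sum_i Pc G (f i) y <= y * cnt G y.
Proof.
move=> sym; rewrite sumP_eq // /cnt card_set_sum big_distrr /=.
apply: leq_sum => u _; case: (eqVneq (deg G u) y) => [<-|] /=; last by rewrite !muln0.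
rewrite mul1n muln1; exact: (inj_count (G u) finj).
Qed.

Lemma sumP_ge (G : rel T) y : symmetric G -> y * cnt G y <= \sum_i Pc G (f i) y + K * cnt G y.
Proof.
move=> sym; rewrite sumP_eq // /cnt card_set_sum !big_distrr -big_split /=.
apply: leq_sum => u _; case: (eqVneq (deg G u) y) => [<-|] /=; last by rewrite !muln0.
rewrite !mul1n !muln1; exact: (inj_count2 (G u) finj).
Qed.

Lemma Wp_le (G : rel T) y : \sum_i ((y <= deg G (f i)) : nat) <= Nge G y.
Proof. exact: (inj_count (fun u => y <= deg G u) finj). Qed.

Lemma Nge_le (G : rel T) y : Nge G y <= \sum_i ((y <= deg G (f i)) : nat) + K.
Proof. exact: (inj_count2 (fun u => y <= deg G u) finj). Qed.

Lemma cnt_le (G : rel T) y : cnt G y <= \sum_i ((deg G (f i) == y) : nat) + K.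
Proof. exact: (inj_count2 (fun u => deg G u == y) finj). Qed.

End Count.

Section CoreS.
Variables (n k : nat) (NG NH a b Wp Wm Sp Sq : nat -> nat).
Hypothesis hn20 : 20 <= n.
Hypothesis hnk : 400 * (k * k) <= n.
Hypothesis hE : forall y, n * NG y + Wm y + Sq y + k * NH y = n * NH y + Wp y + Sp y + k * NG y.
Hypothesis hSp1 : forall y, Sp y <= y * a y.
Hypothesis hSp2 : forall y, y * a y <= Sp y + k * a y.
Hypothesis hSq1 : forall y, Sq y <= y * b y.
Hypothesis hSq2 : forall y, y * b y <= Sq y + k * b y.
Hypothesis hW1 : forall y, Wm y <= Wp y.
Hypothesis hW2 : forall y, Wp y <= NG y.
Hypothesis hW3 : forall y, NH y <= Wm y + k.
Hypothesis hA : forall y, a y + Wm y <= Wp y + k.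
Hypothesis hB : forall y, b y + Wm y.+1 <= Wp y.+1 + k.
Hypothesis hNG : forall y, NG y = a y + NG y.+1.
Hypothesis hNH : forall y, NH y = b y + NH y.+1.
Hypothesis hbG : forall y, NG y <= n.
Hypothesis hbH : forall y, NH y <= n.
Hypothesis h0 : NG 0 = NH 0.

Definition coreF y : Z := (Z.of_nat (NG y) - Z.of_nat (NH y))%Z.

Lemma kle : k <= k * k.
Proof. case: k => // k'; nia. Qed.

Lemma k400 : 400 * k <= n.
Proof. have := kle; nia. Qed.

Lemma coreU y : ((Z.of_nat n - Z.of_nat k - Z.of_nat y - 1) * coreF y
   + (Z.of_nat y - Z.of_nat k) * coreF y.+1 <= 2 * Z.of_nat k * Z.of_nat k + Z.of_nat k)%Z.
Proof.
have e1 := hE y. have s1 := hSp1 y. have s2 := hSq2 y.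
have w2 := hW2 y. have w3 := hW3 y. have b1 := hB y. have w2' := hW2 y.+1. have w3' := hW3 y.+1.
have g := hNG y. have h := hNH y.
have p1 : k * (b y + Wm y.+1) <= k * (Wp y.+1 + k) by apply: leq_mul.
have p2 : k * Wp y.+1 <= k * NG y.+1 by apply: leq_mul.
have p3 : k * NH y.+1 <= k * (Wm y.+1 + k) by apply: leq_mul.
have q1 : y * NG y = y * a y + y * NG y.+1 by rewrite g mulnDr.
have q2 : y * NH y = y * b y + y * NH y.+1 by rewrite h mulnDr.
have q4 : k * NH y = k * b y + k * NH y.+1 by rewrite h mulnDr.
rewrite /coreF; lia.
Qed.

Lemma coreU0 y : ((Z.of_nat n - Z.of_nat k - Z.of_nat y - 1) * coreF y
   <= Z.of_nat k + 2 * Z.of_nat y * Z.of_nat k)%Z.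
Proof.
have e1 := hE y. have s1 := hSp1 y. have s2 := hSq2 y.
have w2 := hW2 y. have w3 := hW3 y. have a1 := hA y.
have g := hNG y. have h := hNH y.
have p1 : y * (a y + Wm y) <= y * (Wp y + k) by apply: leq_mul.
have p2 : y * Wp y <= y * NG y by apply: leq_mul.
have p3 : y * NH y <= y * (Wm y + k) by apply: leq_mul.
rewrite /coreF; lia.
Qed.

Lemma coreL y : (- (2 * Z.of_nat k * Z.of_nat k) <=
   (Z.of_nat n - Z.of_nat y) * coreF y + Z.of_nat y * coreF y.+1)%Z.
Proof.
have e1 := hE y. have s1 := hSp2 y. have s2 := hSq1 y.
have w1 := hW1 y. have w2 := hW2 y. have w3 := hW3 y. have a1 := hA y.
have g := hNG y. have h := hNH y.
have p1 : k * (a y + Wm y) <= k * (Wp y + k) by apply: leq_mul.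
have p2 : k * Wp y <= k * NG y by apply: leq_mul.
have p3 : k * NH y <= k * (Wm y + k) by apply: leq_mul.
have q1 : y * NG y = y * a y + y * NG y.+1 by rewrite g mulnDr.
have q2 : y * NH y = y * b y + y * NH y.+1 by rewrite h mulnDr.
have q4 : k * NG y = k * a y + k * NG y.+1 by rewrite g mulnDr.
rewrite /coreF; lia.
Qed.

Lemma step y (M : Z) : 1 <= y -> 3 * y + 2 * (k * k) + k + 1 <= n -> (1 <= M)%Z ->
  (M <= Z.abs (coreF y))%Z -> (2 * M <= Z.abs (coreF y.+1))%Z.
Proof.
move=> y1 yn M1 MF.
have kk := k400.
case: (Z.le_gt_cases 0 (coreF y)) => sg.
-
  have FM : (M <= coreF y)%Z by lia.
  case: (leqP y k) => yk.
  + have u := @coreU0 y.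
    have hp : (0 <= (coreF y - 1) * (Z.of_nat n - Z.of_nat k - Z.of_nat y - 1))%Z by apply: Z.mul_nonneg_nonneg; lia.
    have hyk : (Z.of_nat y * Z.of_nat k <= Z.of_nat k * Z.of_nat k)%Z by apply: Z.mul_le_mono_nonneg_r; lia.
    exfalso; lia.
  + have u := @coreU y.
    case: (Z.le_gt_cases (coreF y.+1) (- (2 * M))) => c; first by lia.
    exfalso.
    have h1 : (0 <= (Z.of_nat y - Z.of_nat k) * (coreF y.+1 + 2 * M - 1))%Z by apply: Z.mul_nonneg_nonneg; lia.
    have h2 : (0 <= (Z.of_nat n - Z.of_nat k - Z.of_nat y - 1) * (coreF y - M))%Z by apply: Z.mul_nonneg_nonneg; lia.
    have h3 : (0 <= (M - 1) * (Z.of_nat n - 3 * Z.of_nat y + Z.of_nat k - 1))%Z by apply: Z.mul_nonneg_nonneg; lia.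
    lia.
- have FM : (coreF y <= - M)%Z by lia.
  have l := @coreL y.
  case: (Z.le_gt_cases (2 * M) (coreF y.+1)) => c; first by lia.
  exfalso.
  have h1 : (0 <= Z.of_nat y * (2 * M - 1 - coreF y.+1))%Z by apply: Z.mul_nonneg_nonneg; lia.
  have h2 : (0 <= (Z.of_nat n - Z.of_nat y) * (- M - coreF y))%Z by apply: Z.mul_nonneg_nonneg; lia.
  have h3 : (0 <= (M - 1) * (Z.of_nat n - 3 * Z.of_nat y))%Z by apply: Z.mul_nonneg_nonneg; lia.
  lia.
Qed.

Lemma claim1 y0 : coreF y0 = 0%Z -> 2 * (k * k) + 2 * k < y0 -> coreF y0.+1 = 0%Z.
Proof.
move=> F0 yk.
have u := @coreU y0. have l := @coreL y0. rewrite F0 in u l.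
case: (Z.le_gt_cases (coreF y0.+1) 0) => c.
- case: (Z.le_gt_cases 0 (coreF y0.+1)) => c'; first by lia.
  have h : (0 <= Z.of_nat y0 * (- coreF y0.+1 - 1))%Z by apply: Z.mul_nonneg_nonneg; lia.
  lia.
- have h : (0 <= (Z.of_nat y0 - Z.of_nat k) * (coreF y0.+1 - 1))%Z by apply: Z.mul_nonneg_nonneg; lia.
  lia.
Qed.

Lemma pow_big J : 5 <= J -> 4 * J + 3 < 2 ^ J.
Proof.
elim: J => // J IH. rewrite ltnS leq_eqVlt => /orP [/eqP <- //|hJ].
rewrite expnS. have := IH hJ. lia.
Qed.

Lemma Fbound y : (Z.abs (coreF y) <= Z.of_nat n)%Z.
Proof. have := hbG y; have := hbH y; rewrite /coreF; lia. Qed.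

Lemma core_false : (exists y, NG y <> NH y) -> False.
Proof.
move=> ex.
have kk := k400.
have exF : exists y, NG y != NH y by case: ex => y hy; exists y; apply/eqP.
pose y1 := ex_minn exF.
have [hy1 hmin] : NG y1 != NH y1 /\ forall z, NG z != NH z -> y1 <= z.
  by rewrite /y1; case: ex_minnP.
have y1pos : 0 < y1 by case: (posnP y1) hy1 => // ->; rewrite h0 eqxx.
have y1b : y1 <= 2 * (k * k) + 2 * k + 1.
  case: (leqP y1 (2 * (k * k) + 2 * k + 1)) => // big.
  have : coreF (y1.-1).+1 = 0%Z.
    apply: claim1; last by lia.
    have : NG y1.-1 == NH y1.-1.
      case: (boolP (NG y1.-1 == NH y1.-1)) => // /hmin. lia.
    by move/eqP; rewrite /coreF => ->; lia.
  rewrite prednK //. move: hy1; rewrite /coreF => /eqP; lia.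
pose J := n %/ 4.
have hJ : n = J * 4 + n %% 4 by rewrite /J -divn_eq.
have hm : n %% 4 < 4 by rewrite ltn_mod.
have grow : forall j, j <= J -> (Z.of_nat (2 ^ j) <= Z.abs (coreF (y1 + j)))%Z.
  elim=> [_|j IH hj].
  - rewrite addn0 expn0. move: hy1; rewrite /coreF => /eqP; lia.
  - rewrite expnS addnS Nat2Z.inj_mul.
    apply: step; [lia| lia | |].
    + have := expn_gt0 2 j; lia.
    + apply: IH; lia.
have := grow J (leqnn _). have := @Fbound (y1 + J). have := pow_big (J:=J).
lia.
Qed.
End CoreS.

Lemma aux (m k : nat) (G H : rel 'I_m.+1) (f g : 'I_(m.+1 - k) -> 'I_m.+1) :
  20 <= m.+1 -> 400 * (k * k) <= m.+1 -> simple_graph G -> simple_graph H ->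
  injective f -> injective g ->
  (forall i y, Nge (card_del G (f i)) y = Nge (card_del H (g i)) y) ->
  (forall i, deg H (g i) < deg G (f i)) ->
  (exists y, Nge G y <> Nge H y) -> False.
Proof.
move=> h20 hk sG sH finj ginj hc hlt hex.
have [symG _] := sG. have [symH _] := sH.
have kle : k <= m.+1 by move: hk; case: (k) => // k0 h; nia.
have hK : #|'I_m.+1| - #|'I_(m.+1 - k)| = k by rewrite !card_ord subKn.
have pc : forall i y, Nge G y + (y <= deg H (g i)) + Pc H (g i) y
                    = Nge H y + (y <= deg G (f i)) + Pc G (f i) y.
  move=> i y; rewrite -(Nge_card (f i) y sG) -(Nge_card (g i) y sH) hc; lia.
apply: (core_false (n := m.+1) (k := k) (NG := Nge G) (NH := Nge H) (a := cnt G) (b := cnt H)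
   (Wp := fun y => \sum_(i : 'I_(m.+1 - k)) ((y <= deg G (f i)) : nat))
   (Wm := fun y => \sum_(i : 'I_(m.+1 - k)) ((y <= deg H (g i)) : nat))
   (Sp := fun y => \sum_(i : 'I_(m.+1 - k)) Pc G (f i) y) (Sq := fun y => \sum_(i : 'I_(m.+1 - k)) Pc H (g i) y)) => //.
- move=> y.
  have hs : \sum_(i : 'I_(m.+1 - k)) (Nge G y + (y <= deg H (g i)) + Pc H (g i) y)
          = \sum_(i : 'I_(m.+1 - k)) (Nge H y + (y <= deg G (f i)) + Pc G (f i) y) by apply: eq_bigr => i _; exact: pc.
  rewrite !big_split /= !big_const_ord !iter_addn_0 in hs.
  have e1 : Nge G y * (m.+1 - k) + k * Nge G y = m.+1 * Nge G y by rewrite mulnC -mulnDl subnK.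
  have e2 : Nge H y * (m.+1 - k) + k * Nge H y = m.+1 * Nge H y by rewrite mulnC -mulnDl subnK.
  move: hs e1 e2; move: (Nge G y * (m.+1 - k)) (Nge H y * (m.+1 - k)) => P1 P2; move: (\sum_(i : 'I_(m.+1 - k)) ((y <= deg H (g i)) : nat)) (\sum_(i : 'I_(m.+1 - k)) ((y <= deg G (f i)) : nat)) (\sum_(i : 'I_(m.+1 - k)) Pc H (g i) y) (\sum_(i : 'I_(m.+1 - k)) Pc G (f i) y) => A1 A2 A3 A4. lia.
- move=> y; exact: sumP_le.
- move=> y; have := @sumP_ge _ _ f finj G y symG; by rewrite hK.
- move=> y; exact: sumP_le.
- move=> y; have := @sumP_ge _ _ g ginj H y symH; by rewrite hK.
- move=> y; apply: leq_sum => i _; have := hlt i; lia.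
- move=> y; exact: Wp_le.
- move=> y; have := @Nge_le _ _ g ginj H y; by rewrite hK.
- move=> y; have := @cnt_le _ _ f finj G y; rewrite hK => h0.
  have h : cnt G y <= \sum_(i : 'I_(m.+1 - k)) ((deg G (f i) == y) : nat) + k := h0.
  have h2 : \sum_(i : 'I_(m.+1 - k)) ((deg G (f i) == y) : nat) + \sum_(i : 'I_(m.+1 - k)) ((y <= deg H (g i)) : nat)
            <= \sum_(i : 'I_(m.+1 - k)) ((y <= deg G (f i)) : nat).
    rewrite -big_split; apply: leq_sum => i _ /=; have := hlt i; lia.
  lia.
- move=> y; have := @cnt_le _ _ g ginj H y; rewrite hK => h0.
  have h : cnt H y <= \sum_(i : 'I_(m.+1 - k)) ((deg H (g i) == y) : nat) + k := h0.
  have h2 : \sum_(i : 'I_(m.+1 - k)) ((deg H (g i) == y) : nat) + \sum_(i : 'I_(m.+1 - k)) ((y < deg H (g i)) : nat)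
            <= \sum_(i : 'I_(m.+1 - k)) ((y < deg G (f i)) : nat).
    rewrite -big_split; apply: leq_sum => i _ /=; have := hlt i; lia.
  lia.
- move=> y; exact: Nge_split.
- move=> y; exact: Nge_split.
- move=> y; have := Nge_bound G y; by rewrite card_ord.
- move=> y; have := Nge_bound H y; by rewrite card_ord.
Qed.


Theorem theorem1 :
  exists N : nat, forall m k : nat, N <= m.+1 -> 400 * k ^ 2 <= m.+1 ->
  forall (G H : rel 'I_m.+1) (C : 'I_(m.+1 - k) -> rel 'I_m),
    simple_graph G -> simple_graph H -> (forall i, simple_graph (C i)) ->
    (exists f : 'I_(m.+1 - k) -> 'I_m.+1, injective f /\
        forall i, graph_iso (card_del G (f i)) (C i)) ->
    (exists g : 'I_(m.+1 - k) -> 'I_m.+1, injective g /\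
        forall i, graph_iso (card_del H (g i)) (C i)) ->
    nedges G = nedges H.
Proof.
exists 20 => m k hN hk G H C sG sH sC [f [finj hf]] [g [ginj hg]].
have hk' : 400 * (k * k) <= m.+1 by rewrite mulnn.
have hc : forall i y, Nge (card_del G (f i)) y = Nge (card_del H (g i)) y.
  by move=> i y; rewrite (iso_Nge y (hf i)) (iso_Nge y (hg i)).
have sumv : forall (G0 : rel 'I_m.+1) v, simple_graph G0 ->
   \sum_(y < m.+1) Nge G0 y = \sum_(y < m.+1) Nge (card_del G0 v) y + (deg G0 v).+1 + deg G0 v.
  move=> G0 v s0.
  have -> : \sum_(y < m.+1) Nge G0 y
     = \sum_(y < m.+1) (Nge (card_del G0 v) y + (y <= deg G0 v) + Pc G0 v y).
    by apply: eq_bigr => y _; rewrite Nge_card.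
  rewrite !big_split /= sum_Pc // sum_leq_x; congr (_ + _ + _).
  by apply/minn_idPr; rewrite ltnS deg_le.
have eG := sum_Nge sG; have eH := sum_Nge sH.
rewrite (handshake sG) in eG; rewrite (handshake sH) in eH.
have key : forall i, nedges G + deg H (g i) = nedges H + deg G (f i).
  move=> i; have s1 := sumv G (f i) sG; have s2 := sumv H (g i) sH.
  have s3 : \sum_(y < m.+1) Nge (card_del G (f i)) y = \sum_(y < m.+1) Nge (card_del H (g i)) y.
    by apply: eq_bigr => y _; rewrite hc.
  lia.
case: (ltngtP (nedges G) (nedges H)) => hGH //.
- exfalso; apply: (@aux m k H G g f hN hk' sH sG ginj finj).
  + by move=> i y; rewrite hc.
  + move=> i; have := key i; lia.
  + case: (boolP [exists y : 'I_m.+1, Nge H y != Nge G y]) => [/existsP [y /eqP hy]|hall].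
      by exists y.
    exfalso.
    have : \sum_(y < m.+1) Nge H y = \sum_(y < m.+1) Nge G y.
      apply: eq_bigr => y _; move/existsPn: hall => /(_ y) /negPn /eqP; done.
    lia.
- exfalso; apply: (@aux m k G H f g hN hk' sG sH finj ginj).
  + by move=> i y; rewrite hc.
  + move=> i; have := key i; lia.
  + case: (boolP [exists y : 'I_m.+1, Nge G y != Nge H y]) => [/existsP [y /eqP hy]|hall].
      by exists y.
    exfalso.
    have : \sum_(y < m.+1) Nge G y = \sum_(y < m.+1) Nge H y.
      apply: eq_bigr => y _; move/existsPn: hall => /(_ y) /negPn /eqP; done.
    lia.
Qed.
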